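(* Let $E$ be a real Banach space and $\mathcal{C}\subset E$ a regular Birkhoff cone with $\ell\in E'$, $\|\ell\|=1$, and $K<\infty$ such that $\frac1K\|u\|\le\langle\ell,u\rangle\le\|u\|$ for $u\in\mathcal{C}$. Let $\mathcal{C}_1\subset\mathcal{C}$ be a subcone with finite Hilbert diameter $\Delta=\sup\{d_{\mathcal{C}}(a,b):a,b\in\mathcal{C}_1\setminus\{0\}\}<+\infty$. Suppose there are $x\in\mathcal{C}_1$ with $\langle\ell,x\rangle=1$ and $r>0$ with $B(x,r)\subset\mathcal{C}_1$. Then for every $y\in\mathcal{C}_1$, \[B_E\Big(y,\frac1K re^{-\Delta}\|y\|\Big)\subset\mathcal{C}.\]
   Context: A Birkhoff cone is a closed convex set $\mathcal{C}\subset E$ with $\mathbb{R}_+\mathcal{C}=\mathcal{C}$ and $\mathcal{C}\cap(-\mathcal{C})=\{0\}$; regular means it has non-empty interior and the stated outer regularity functional exists. A subcone is a subset $\mathcal{C}_1\subset\mathcal{C}$ with $\mathbb{R}_+\mathcal{C}_1=\mathcal{C}_1$. Hilbert metric: $\delta(a,b)=\inf\{t>0:ta-b\in\mathcal{C}\}$, $d_{\mathcal{C}}(a,b)=\log(\delta(a,b)\delta(b,a))$ for $a,b\in\mathcal{C}\setminus\{0\}$. *)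

(* Defs.v *)
From HB Require Import structures.
From mathcomp Require Import all_boot all_order all_algebra.
From mathcomp Require Import all_classical all_reals all_analysis.
Set Implicit Arguments. Unset Strict Implicit. Unset Printing Implicit Defensive.
Import Order.TTheory GRing.Theory Num.Theory.
Import numFieldNormedType.Exports.
Local Open Scope classical_set_scope.
Local Open Scope ring_scope.

Section BirkhoffCones.
Variables (R : realType) (E : normedModType R).

Definition cone_closed_Rplus (A : set E) : Prop :=
  [set z | exists t a, 0 <= t /\ A a /\ z = t *: a] = A.

Definition birkhoff_cone (C : set E) : Prop :=
  [/\ closed C,
      (forall a b t, C a -> C b -> 0 <= t <= 1 -> C (t *: a + (1 - t) *: b)),
      cone_closed_Rplus C &
      C `&` [set z | C (- z)] = [set 0]].

Definition subcone (C1 C : set E) : Prop := C1 `<=` C /\ cone_closed_Rplus C1.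

Definition linear_functional (l : E -> R) : Prop :=
  forall (a : R) (u v : E), l (a *: u + v) = a * l u + l v.

Definition opnorm_eq1 (l : E -> R) : Prop :=
  (forall u : E, `|l u| <= `|u|) /\
  (forall e : R, 0 < e -> exists u : E, `|u| <= 1 /\ 1 - e < `|l u|).

(* delta(a,b) = inf { t > 0 : t a - b ∈ C }  (+oo if the set is empty) *)
Definition hdelta (C : set E) (a b : E) : \bar R :=
  ereal_inf [set v | exists t : R, 0 < t /\ C (t *: a - b) /\ v = t%:E].

Definition hilbert_d (C : set E) (a b : E) : \bar R :=
  match hdelta C a b, hdelta C b a with
  | EFin r1, EFin r2 => (ln (r1 * r2))%:E
  | _, _ => +oo%E
  end.

Definition hilbert_diam (C C1 : set E) : \bar R :=
  ereal_sup [set v | exists a b, C1 a /\ a != 0 /\ C1 b /\ b != 0 /\ v = hilbert_d C a b].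

End BirkhoffCones.

(* Main.v *)
Require Import Defs.
From HB Require Import structures.
From mathcomp Require Import all_boot all_order all_algebra.
From mathcomp Require Import all_classical all_reals all_analysis.
From mathcomp Require Import ring lra.
Import Order.TTheory GRing.Theory Num.Theory.
Import numFieldNormedType.Exports.
Local Open Scope classical_set_scope.
Local Open Scope ring_scope.

Theorem lemmaA10 (R : realType) (E : completeNormedModType R)
    (C C1 : set E) (l : E -> R) (K : R) (x : E) (r : R) :
  birkhoff_cone C ->
  interior C !=set0 ->
  linear_functional l -> opnorm_eq1 l ->
  0 < K ->
  (forall u, C u -> K^-1 * `|u| <= l u /\ l u <= `|u|) ->
  subcone C1 C ->
  (hilbert_diam C C1 < +oo)%E ->
  C1 x -> l x = 1 ->
  0 < r -> ball x r `<=` C1 ->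
  forall y, C1 y ->
    ball y (K^-1 * r * expR (- fine (hilbert_diam C C1)) * `|y|) `<=` C.
Proof.
move=> [Ccl Ccvx Ccone Cpt] _ llin _ K0 Kl [C1C C1cone] Hdiam C1x lx1 r0 Bx y C1y.
have l0 : l 0 = 0.
  have := llin 1 0 0; rewrite scale1r addr0 mul1r => h.
  by apply: (addrI (l 0)); rewrite addr0 -h.
have lZ a u : l (a *: u) = a * l u.
  by have := llin a u 0; rewrite addr0 l0 addr0.
have lB u v : l (u - v) = l u - l v.
  have := llin 1 u (- v); rewrite scale1r mul1r => ->.
  by rewrite -scaleN1r lZ mulN1r.
have Cscale t a : 0 <= t -> C a -> C (t *: a).
  by move=> t0 Ca; rewrite -Ccone; exists t, a.
have Cadd a b : C a -> C b -> C (a + b).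
  move=> Ca Cb.
  have h := Ccvx a b (2^-1) Ca Cb.
  have -> : a + b = 2 *: (2^-1 *: a + (1 - 2^-1) *: b).
    have -> : (1 - 2^-1 : R) = 2^-1 by field.
    by rewrite scalerDr !scalerA mulfV ?pnatr_eq0 // !scale1r.
  apply: Cscale => //; apply: h; apply/andP; split.
    by rewrite invr_ge0.
  by rewrite invf_le1 // ler1n.
have [->|y0] := eqVneq y 0.
  move=> w; rewrite -ball_normE /ball_ /= normr0 mulr0.
  by rewrite ltNge normr_ge0.
have Cy : C y by apply: C1C.
have [lyK _] := Kl _ Cy.
have ypos : 0 < `|y| by rewrite normr_gt0.
have lypos : 0 < l y.
  by apply: lt_le_trans lyK; rewrite mulr_gt0 // invr_gt0.
have x0 : x != 0.
  by apply/eqP => x0; move: lx1; rewrite x0 l0 => /eqP; rewrite eq_sym oner_eq0.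
have dxy : (hilbert_d C x y <= hilbert_diam C C1)%E.
  by apply: ereal_sup_ubound; exists x, y.
have fin : (hilbert_d C x y < +oo)%E by apply: le_lt_trans Hdiam.
have tlb : ((l y)%:E <= hdelta C x y)%E.
  apply/ereal_infP => _ [t [t0 [Ct ->]]]; rewrite lee_fin.
  have [h _] := Kl _ Ct; move: h; rewrite lB lZ lx1 mulr1 => h.
  have : 0 <= K^-1 * `|t *: x - y| by rewrite mulr_ge0 // invr_ge0 ltW.
  lra.
have slb : ((l y)^-1%:E <= hdelta C y x)%E.
  apply/ereal_infP => _ [s [s0 [Cs ->]]]; rewrite lee_fin.
  have [h _] := Kl _ Cs; move: h; rewrite lB lZ lx1 => h.
  have : 0 <= K^-1 * `|s *: y - x| by rewrite mulr_ge0 // invr_ge0 ltW.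
  move=> h2.
  rewrite -(ler_pM2r lypos) mulVf ?gt_eqF //; lra.
move: dxy fin tlb slb; rewrite /hilbert_d.
case Ht: (hdelta C x y) => [t0| |]; case Hs: (hdelta C y x) => [s0| |];
  rewrite ?ltxx // => dxy _; rewrite ?lee_fin // => tlb slb.
move: dxy Hdiam; case HD: (hilbert_diam C C1) => [D| |]; rewrite ?ltxx //=.
rewrite lee_fin => lnD _.
have t0p : 0 < t0 by apply: lt_le_trans tlb.
have s0p : 0 < s0.
  by apply: lt_le_trans slb; rewrite invr_gt0.
have ts : 0 < t0 * s0 by rewrite mulr_gt0.
have eD : expR (- D) <= (t0 * s0)^-1.
  rewrite -(lnK ts) ?posrE // -expRN ler_expR; lra.
have key : K^-1 * r * expR (- D) * `|y| <= r / s0.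
  set e := expR (- D) in eD *.
  have e0 : 0 <= e by rewrite /e expR_ge0.
  set u := (t0 * s0)^-1 in eD.
  have -> : r / s0 = t0 * r * u by rewrite /u invfM; field; rewrite ?gt_eqF.
  have aK : K^-1 * `|y| <= t0 by lra.
  have a0 : 0 <= K^-1 * `|y| by rewrite mulr_ge0 // invr_ge0 ltW.
  have u0 : 0 <= u by rewrite /u invr_ge0 ltW.
  set a := K^-1 * `|y| in aK a0.
  have -> : K^-1 * r * e * `|y| = a * r * e by rewrite /a; ring.
  have h1 : a * r * e <= a * r * u by rewrite ler_wpM2l // mulr_ge0 // ltW.
  have h2 : a * r * u <= t0 * r * u by rewrite ler_wpM2r // ler_wpM2r // ltW.
  lra.
move=> w; rewrite -ball_normE /ball_ /= => hw.
have [->|wy] := eqVneq w y; first by [].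
have ep : 0 < `|y - w| by rewrite normr_gt0 subr_eq0 eq_sym.
have hlt : s0 < r / `|y - w|.
  rewrite ltr_pdivlMr //.
  have : `|y - w| < r / s0 by exact: lt_le_trans hw key.
  by rewrite ltr_pdivlMr // mulrC.
have : (hdelta C y x < (r / `|y - w|)%:E)%E by rewrite Hs lte_fin.
move=> /ereal_inf_lt [_ [s [sp [Cs ->]]]]; rewrite lte_fin => slt.
have sw : s * `|y - w| < r by rewrite -ltr_pdivlMr.
have Cb : C (x + s *: (w - y)).
  apply: C1C; apply: Bx; rewrite -ball_normE /ball_ /=.
  rewrite opprD addrA subrr add0r normrN normrZ gtr0_norm // distrC //.
have Csw : C (s *: w).
  have -> : s *: w = (s *: y - x) + (x + s *: (w - y)).
    by rewrite scalerBr addrA subrK addrC subrK.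
  by apply: Cadd.
have si : 0 <= s^-1 by rewrite invr_ge0 ltW.
have := Cscale _ _ si Csw.
by rewrite scalerA mulVf ?gt_eqF // scale1r.
Qed.
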